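(* Let $X\subseteq\mathbb{N}$ be finite, $\omega^{n+6}$-large and exp-sparse. Then $X$ admits an $(\omega^n,\omega)$-grouping: for every colouring $P:[X]^2\to2$ there is an $(\omega^n,\omega)$-grouping for $P$.
   Context: Ordinals below $\omega^\omega$ are in Cantor normal form; $\omega^j\cdot m$ = sum of $m$ copies of $\omega^j$. For $m\in\mathbb{N}$: $0[m]=0$, $(\beta+1)[m]=\beta$, $(\beta+\omega^{n})[m]=\beta+\omega^{n-1}\cdot m$ for $n\ge1$. A finite $X=\{x_0<\dots<x_{\ell-1}\}\subseteq\mathbb{N}$ is $\alpha$-large if $\alpha[x_0]\cdots[x_{\ell-1}]=0$. A set $X$ with $\min X\ge3$ is exp-sparse if $x<y$ in $X$ implies $4^x<y$. For $P:[X]^2\to2$, a finite sequence $\langle F_i\subseteq X:i<\ell\rangle$ of finite sets is an $(\alpha,\beta)$-grouping for $P$ if: (1) $\max F_i<\min F_j$ for $i<j<\ell$; (2) each $F_i$ is $\alpha$-large; (3) $\{\max F_i:i<\ell\}$ is $\beta$-large; (4) for all $i<j<\ell$, $x,x'\in F_i$, $y,y'\in F_j$: $P(x,y)=P(x',y')$. *)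

(* Defs.v *)
From mathcomp Require Import all_boot.
Set Implicit Arguments. Unset Strict Implicit. Unset Printing Implicit Defensive.

(* Ordinals below omega^omega in Cantor normal form
     alpha = omega^e_1 + ... + omega^e_k,  e_1 >= ... >= e_k,
   are represented by the list of exponents in REVERSED order
   [:: e_k; ...; e_1] (smallest term first).  The empty list is 0. *)
Definition cnf := seq nat.

Definition omega_pow (n : nat) : cnf := [:: n].

(* fundamental sequence alpha[m]:
   0[m] = 0, (beta+1)[m] = beta, (beta+omega^(n+1))[m] = beta + omega^n * m *)
Definition fund (a : cnf) (m : nat) : cnf :=
  match a with
  | [::] => [::]
  | 0 :: b => b
  | n.+1 :: b => nseq m n ++ b
  end.

(* A finite set X = {x_0 < ... < x_(l-1)} is represented by the strictly
   increasing list [:: x_0; ...; x_(l-1)].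
   X is alpha-large iff alpha[x_0]...[x_(l-1)] = 0. *)
Definition large (a : cnf) (X : seq nat) : bool :=
  foldl fund a X == [::].

Definition exp_sparse (X : seq nat) : Prop :=
  (forall x, x \in X -> 3 <= x) /\
  (forall x y, x \in X -> y \in X -> x < y -> 4 ^ x < y).

(* (alpha,beta)-grouping for P : [X]^2 -> 2 (P given as a function on pairs;
   only its values on pairs x < y of X are relevant). *)
Definition grouping (X : seq nat) (P : nat -> nat -> bool) (a b : cnf)
    (Fs : seq (seq nat)) : Prop :=
  (forall i, i < size Fs -> sorted ltn (nth [::] Fs i)
                            /\ {subset nth [::] Fs i <= X}) /\
  (forall i j, i < j < size Fs ->
     forall x y, x \in nth [::] Fs i -> y \in nth [::] Fs j -> x < y) /\
  (forall i, i < size Fs -> large a (nth [::] Fs i)) /\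
  large b (map (fun F => \max_(x <- F) x) Fs) /\
  (forall i j, i < j < size Fs ->
     forall x x' y y', x \in nth [::] Fs i -> x' \in nth [::] Fs i ->
       y \in nth [::] Fs j -> y' \in nth [::] Fs j -> P x y = P x' y').

(* Main.v *)
Require Import Defs.
From mathcomp Require Import all_boot.
From mathcomp Require Import zify.
Set Implicit Arguments. Unset Strict Implicit. Unset Printing Implicit Defensive.


Fixpoint tight (k : nat) (S : seq nat) : Prop :=
  match k with
  | 0 => exists a, S = [:: a]
  | k'.+1 => exists a Qs, [/\ S = a :: flatten Qs, size Qs = a &
                              forall Q, Q \in Qs -> tight k' Q]
  end.

Lemma tight_nil k : ~ tight k [::].
Proof. by case: k => [[a]|k [a [Qs []]]]. Qed.

Fixpoint ex (a : cnf) (Y : seq nat) : bool :=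
  match Y with
  | [::] => false
  | y :: Y' => if (fund a y == [::] :> seq nat) then Y' == [::] else ex (fund a y) Y'
  end.

Lemma fund_cat (a b : cnf) m : a != [::] -> fund (a ++ b) m = fund a m ++ b.
Proof. by case: a => [|[|e] a] //= _; rewrite catA. Qed.

Lemma foldl_nil Y : foldl fund [::] Y = [::].
Proof. by elim: Y. Qed.

Lemma ex_large a Y : ex a Y -> foldl fund a Y = [::].
Proof.
elim: Y a => [|y Y IH] a //=.
case: eqP => [-> /eqP -> //| _ /IH //].
Qed.

Lemma ex_cat (a b : cnf) Y1 Y2 : a != [::] -> b != [::] -> ex a Y1 -> ex b Y2 ->
  ex (a ++ b) (Y1 ++ Y2).
Proof.
elim: Y1 a => [|y Y1 IH] a //= ha hb.
rewrite fund_cat //.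
case: eqP => [E /eqP -> h2 | /eqP hne h1 h2].
  by rewrite E /= (negbTE hb).
have -> : (fund a y ++ b == [::] :> seq nat) = false by case: (fund a y) hne.
exact: IH.
Qed.

Lemma ex_flatten k Qs : Qs != [::] -> (forall Q, Q \in Qs -> ex [:: k] Q) ->
  ex (nseq (size Qs) k) (flatten Qs).
Proof.
elim: Qs => [|Q Qs IH] // _ hQ.
case: Qs IH hQ => [|Q' Qs] IH hQ.
  by rewrite /= cats0; apply: hQ; rewrite mem_head.
rewrite /= -cat1s.
apply: ex_cat => //; first by apply: hQ; rewrite mem_head.
apply: IH => // R hR; apply: hQ; by rewrite in_cons hR orbT.
Qed.

Lemma tight_ex k S : tight k S -> ex [:: k] S.
Proof.
elim: k S => [|k IH] S.
  by case=> a ->.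
case=> a [Qs [-> hs hQ]] /=.
case: Qs hs hQ => [|Q Qs] hs hQ.
  by rewrite -hs.
rewrite -hs cats0.
have -> : (nseq (size (Q :: Qs)) k == [::] :> seq nat) = false by [].
apply: ex_flatten => // R hR; exact: IH (hQ R hR).
Qed.

Lemma large_of_tight k S : tight k S -> large (omega_pow k) S.
Proof. by move=> h; apply/eqP; apply: ex_large; apply: tight_ex. Qed.

Lemma nseq0_large m r : m <= size r -> foldl fund (nseq m 0) r = [::].
Proof.
elim: r m => [|y r IH] [|m] //= h.
  by rewrite foldl_nil.
exact: IH.
Qed.

Lemma foldl_split (a b : cnf) Y : a != [::] -> foldl fund (a ++ b) Y = [::] ->
  exists Y1 Y2, [/\ Y = Y1 ++ Y2, foldl fund a Y1 = [::] & foldl fund b Y2 = [::]].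
Proof.
elim: Y a => [|y Y IH] a ha /=.
  by case: a ha.
rewrite fund_cat //.
case E: (fund a y == [::] :> seq nat).
  move/eqP: E => E; rewrite E /= => h.
  by exists [:: y], Y; rewrite /= E.
move=> h; have [Y1 [Y2 [-> h1 h2]]] := IH _ (negbT E) h.
by exists (y :: Y1), Y2.
Qed.

Lemma large_tight k Y : foldl fund [:: k] Y = [::] -> exists S, subseq S Y /\ tight k S.
Proof.
elim: k Y => [|k IH] [|y Y] //=.
- move=> _; exists [:: y]; split; last by exists y.
  exact: (prefix_subseq [:: y] Y).
- rewrite cats0 => h.
  suff [Qs [hs hQ hsub]] : exists Qs, [/\ size Qs = y, (forall Q, Q \in Qs -> tight k Q)
      & subseq (flatten Qs) Y].
    exists (y :: flatten Qs); split; first by rewrite /= eqxx.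
    by exists y, Qs.
  elim: y Y h => [|m IHm] Y h.
    by exists [::]; split => //; rewrite sub0seq.
  have [Y1 [Y2 [-> h1 h2]]] := foldl_split (b := nseq m k) (a := [:: k]) isT h.
  have [S [hS tS]] := IH _ h1.
  have [Qs [hs hQ hsub]] := IHm _ h2.
  exists (S :: Qs); split => /=; first by rewrite hs.
    by move=> Q; rewrite in_cons => /orP [/eqP ->|/hQ].
  exact: cat_subseq.
Qed.

Definition amb X := sorted ltn X /\ exp_sparse X.

Lemma sorted_cat_lt s1 s2 x y : sorted ltn (s1 ++ s2) -> x \in s1 -> y \in s2 -> x < y.
Proof.
rewrite sorted_pairwise; last exact: ltn_trans.
rewrite pairwise_cat => /and3P [/allrelP h _ _]; exact: h.
Qed.

Lemma srt_sub X S : amb X -> subseq S X -> sorted ltn S.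
Proof. by move=> [hX _] h; apply: subseq_sorted h hX; exact: ltn_trans. Qed.

Lemma sub_ge3 X S x : amb X -> subseq S X -> x \in S -> 3 <= x.
Proof. by move=> [_ [h _]] /mem_subseq hs /hs /h. Qed.

Lemma sub_sparse X s1 s2 x y : amb X -> subseq (s1 ++ s2) X -> x \in s1 -> y \in s2 -> 4 ^ x < y.
Proof.
move=> hA hs hx hy.
have hlt := sorted_cat_lt (srt_sub hA hs) hx hy.
case: hA => _ [_ h]; apply: h hlt.
  by apply: (mem_subseq hs); rewrite mem_cat hx.
by apply: (mem_subseq hs); rewrite mem_cat hy orbT.
Qed.

Lemma sub_pre (a b c : seq nat) : subseq a b -> subseq a (b ++ c).
Proof. by move=> h; apply: subseq_trans h (prefix_subseq _ _). Qed.
Lemma sub_suf (a b c : seq nat) : subseq a c -> subseq a (b ++ c).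
Proof. by move=> h; apply: subseq_trans h (suffix_subseq _ _). Qed.
Lemma all_sub (p : pred nat) s1 s2 : subseq s1 s2 -> all p s2 -> all p s1.
Proof. by move=> /mem_subseq h /allP H; apply/allP => x /h; apply: H. Qed.
Lemma sub_take_flatten n (Rs : seq (seq nat)) : subseq (flatten (take n Rs)) (flatten Rs).
Proof. by rewrite -[in X in subseq _ X](cat_take_drop n Rs) flatten_cat prefix_subseq. Qed.
Lemma mem_flatten_sub (F : seq nat) Fs : F \in Fs -> subseq F (flatten Fs).
Proof.
elim: Fs => [|G Gs IH] //; rewrite in_cons => /orP [/eqP -> | /IH h] /=.
  exact: prefix_subseq.
exact: sub_suf.
Qed.

Lemma le4 x : 4 * x <= 4 ^ x.
Proof. elim: x => [|x IH] //; rewrite expnS; have := expn_gt0 4 x; lia. Qed.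

Lemma ar1 a b c : a %/ 2 <= b + c -> a.+2 %/ 2 <= b + c.+1.
Proof. lia. Qed.
Lemma ar1' a b c : a %/ 2 <= b + c -> a.+2 %/ 2 <= b.+1 + c.
Proof. lia. Qed.
Lemma ar2 a b c : a %/ 2 <= b + c -> b <= c -> a %/ 4 <= c.
Proof. lia. Qed.

Definition PL_stmt X k := forall S1 S2 (f : nat -> bool), tight k S1 -> tight k S2 ->
  subseq (S1 ++ S2) X ->
  exists c S, [/\ tight k S, subseq S (S1 ++ S2) & all (fun x => f x == c) S].

Definition SINGLE_stmt X k := forall (f : nat -> bool) Qs,
  (forall Q, Q \in Qs -> tight k Q) -> subseq (flatten Qs) X ->
  exists c Rs, [/\ forall R, R \in Rs -> tight k R, subseq (flatten Rs) (flatten Qs),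
     all (fun x => f x == c) (flatten Rs) & size Qs %/ 4 <= size Rs].

Lemma single_of_pl X k : PL_stmt X k -> SINGLE_stmt X k.
Proof.
move=> hPL f.
suff H : forall n Qs, size Qs <= n -> (forall Q, Q \in Qs -> tight k Q) -> subseq (flatten Qs) X ->
  exists R0 R1, [/\ (forall R, R \in R0 ++ R1 -> tight k R),
    subseq (flatten R0) (flatten Qs) /\ all (fun x => f x == false) (flatten R0),
    subseq (flatten R1) (flatten Qs) /\ all (fun x => f x == true) (flatten R1)
    & size Qs %/ 2 <= size R0 + size R1].
  move=> Qs hQ hX.
  have [R0 [R1 [hT [s0 a0] [s1 a1] hs]]] := H _ Qs (leqnn _) hQ hX.
  case: (leqP (size R0) (size R1)) => hle.
    exists true, R1; split => //; last exact: ar2 hs hle.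
    by move=> R hR; apply: hT; rewrite mem_cat hR orbT.
  exists false, R0; split => //; last by lia.
  by move=> R hR; apply: hT; rewrite mem_cat hR.
elim=> [|n IH] [|Q1 [|Q2 Qs]] //= hs hQ hX;
  try (by exists [::], [::]; split => //; rewrite sub0seq).
have hQ1 : tight k Q1 by apply: hQ; rewrite mem_head.
have hQ2 : tight k Q2 by apply: hQ; rewrite !in_cons eqxx orbT.
have hQs : forall Q, Q \in Qs -> tight k Q by move=> Q hQ'; apply: hQ; rewrite !in_cons hQ' !orbT.
have hX12 : subseq (Q1 ++ Q2) X.
  by apply: subseq_trans hX; rewrite catA; apply: prefix_subseq.
have hXs : subseq (flatten Qs) X.
  by apply: subseq_trans hX; rewrite catA; apply: suffix_subseq.
have [c [S [tS sS aS]]] := hPL Q1 Q2 f hQ1 hQ2 hX12.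
have [R0 [R1 [hT [s0 a0] [s1 a1] hsz]]] := IH Qs (ltnSE (ltnW hs)) hQs hXs.
rewrite catA.
case: c aS => aS.
- exists R0, (S :: R1); split.
  + move=> R; rewrite mem_cat in_cons => /or3P [hR|/eqP ->|hR] //; apply: hT; by rewrite mem_cat hR ?orbT.
  + by split => //; apply: sub_suf.
  + by split => /=; [apply: cat_subseq | rewrite all_cat aS].
  + exact: ar1 hsz.
- exists (S :: R0), R1; split.
  + move=> R; rewrite /= in_cons => /orP [/eqP ->|hR] //; apply: hT; by rewrite hR.
  + by split => /=; [apply: cat_subseq | rewrite all_cat aS].
  + by split => //; apply: sub_suf.
  + exact: ar1' hsz.
Qed.

Lemma ar3 x a r : 4 * x <= 4 ^ x -> 4 ^ x < a -> a %/ 4 <= r -> x <= r.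
Proof. lia. Qed.

Lemma pl_all X k : amb X -> PL_stmt X k.
Proof.
move=> hA; elim: k => [|k IH].
  move=> S1 S2 f [a ->] [b ->] _.
  exists (f a), [:: a]; split; [by exists a | exact: prefix_subseq | by rewrite /= eqxx].
move=> S1 S2 f hS1 hS2 hX.
have [a [Q [eS1 hsQ hQ]]] := hS1.
have [a' [Q' [eS2 hsQ' hQ']]] := hS2.
have hXQ' : subseq (flatten Q') X.
  apply: subseq_trans hX; rewrite eS2 -cat1s catA; exact: suffix_subseq.
have [c [Rs [hR sR aR szR]]] := single_of_pl IH f hQ' hXQ'.
case: (boolP (has (fun x => f x == c) S1)) => [/hasP [x hx /eqP fx] | hn].
  have hxa : 4 ^ x < a' by apply: sub_sparse hA hX hx _; rewrite eS2 mem_head.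
  have hxs : x <= size Rs by apply: ar3 (le4 x) _ szR; rewrite hsQ'.
  exists c, (x :: flatten (take x Rs)); split.
  - exists x, (take x Rs); split => //; first by rewrite size_takel.
    by move=> R /mem_take /hR.
  - rewrite -cat1s; apply: cat_subseq; first by rewrite sub1seq.
    rewrite eS2; apply: subseq_trans (subseq_cons _ a').
    apply: subseq_trans sR; exact: sub_take_flatten.
  - rewrite /= fx eqxx /=; apply: all_sub aR; exact: sub_take_flatten.
exists (~~ c), S1; split => //; first exact: prefix_subseq.
rewrite -all_predC in hn; apply: sub_all hn => y /=; by case: (f y); case: (c).
Qed.

Lemma multi X k (g : nat -> nat -> bool) : amb X -> forall xs Qs,
  (forall Q, Q \in Qs -> tight k Q) -> subseq (flatten Qs) X ->
  exists Rs, [/\ forall R, R \in Rs -> tight k R, subseq (flatten Rs) (flatten Qs),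
    (forall x, x \in xs -> exists c, all (fun y => g x y == c) (flatten Rs))
    & size Qs %/ 4 ^ size xs <= size Rs].
Proof.
move=> hA; elim=> [|x xs IH] Qs hQ hX.
  by exists Qs; split => //; rewrite expn0 divn1.
have [c [Rs1 [hR1 s1 a1 z1]]] := single_of_pl (@pl_all X k hA) (g x) hQ hX.
have [Rs2 [hR2 s2 a2 z2]] := IH Rs1 hR1 (subseq_trans s1 hX).
exists Rs2; split => //.
- exact: subseq_trans s2 s1.
- move=> y; rewrite in_cons => /orP [/eqP -> | /a2 //].
  by exists c; apply: all_sub a1.
- apply: leq_trans z2; rewrite /= expnS divnMA; exact: leq_div2r.
Qed.

Lemma last_ge x s : sorted ltn (x :: s) -> x + size s <= last x s.
Proof.
elim: s x => [|y s IH] x /=; first by rewrite addn0.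
case/andP => hxy hs; have := IH y hs; lia.
Qed.

Lemma pow_size_le X pre y s : amb X -> subseq (pre ++ y :: s) X -> 4 ^ size pre <= y.
Proof.
move=> hA hX; case: pre hX => [|p pr] hX.
  by rewrite expn0; apply: leq_trans (sub_ge3 hA hX (mem_head _ _)).
have hl : 4 ^ last p pr < y by apply: sub_sparse hA hX (mem_last _ _) (mem_head _ _).
have hs : sorted ltn (p :: pr).
  have h1 := subseq_trans (prefix_subseq (p :: pr) (y :: s)) hX. exact: (srt_sub hA h1).
have hp : 3 <= p by apply: sub_ge3 hA hX _; rewrite mem_head.
have := last_ge hs => h.
apply: ltnW; apply: leq_ltn_trans hl; apply: leq_pexp2l => //=; lia.
Qed.

Lemma tight_head k W : tight k W -> head 0 W \in W.
Proof. by case: W => [/tight_nil //|w W _]; rewrite mem_head. Qed.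

Definition rel1 (P : nat -> nat -> bool) (W V : seq nat) :=
  all (fun x => all (fun y => P x y == P x (head 0 V)) V) W.
Definition hom (P : nat -> nat -> bool) (F G : seq nat) :=
  all (fun x => all (fun x' => all (fun y => all (fun y' => P x y == P x' y') G) G) F) F.

Lemma ph1 X k (P : nat -> nat -> bool) : amb X -> forall Ys pre,
  (forall Y, Y \in Ys -> tight k.+1 Y) -> subseq (pre ++ flatten Ys) X ->
  exists Ws, [/\ size Ws = size Ys, forall W, W \in Ws -> tight k W,
    subseq (flatten Ws) (flatten Ys),
    (forall W, W \in Ws -> forall x y, x \in pre -> y \in W -> P x y = P x (head 0 W))
    & pairwise (rel1 P) Ws].
Proof.
move=> hA; elim=> [|Y Ys IH] pre hY hX.
  by exists [::]; split.
have [y [QY [eY hsY hQY]]] := hY Y (mem_head _ _).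
have hXQ : subseq (flatten QY) X.
  apply: subseq_trans hX; apply: sub_suf; rewrite eY.
  exact: (subseq_trans (subseq_cons _ y) (prefix_subseq (y :: flatten QY) (flatten Ys))).
have [Rs [hR sR aR zR]] := multi P hA pre hQY hXQ.
have hy : 4 ^ size pre <= y.
  by apply: (pow_size_le (s := flatten QY ++ flatten Ys) hA); rewrite -cat_cons -eY.
have : 0 < size Rs by apply: leq_trans zR; rewrite leq_divRL ?expn_gt0 // mul1n hsY.
case: Rs hR sR aR zR => [//|W Rs'] hR sR aR zR _.
have tW : tight k W by apply: hR; rewrite mem_head.
have sWY : subseq W Y.
  rewrite eY; apply: subseq_trans (subseq_cons _ y).
  apply: subseq_trans sR; exact: prefix_subseq.
have hX' : subseq ((pre ++ W) ++ flatten Ys) X.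
  apply: subseq_trans hX; rewrite -catA; apply: cat_subseq => //; exact: cat_subseq.
have hY' : forall Y', Y' \in Ys -> tight k.+1 Y' by move=> Y' h; apply: hY; rewrite in_cons h orbT.
have [Ws [hsz hW sW hpre hpw]] := IH _ hY' hX'.
have hWpat : forall x y', x \in pre -> y' \in W -> P x y' = P x (head 0 W).
  move=> x y' hx hy'.
  have [c /allP hc] := aR x hx.
  have e1 := hc y'; have e2 := hc (head 0 W).
  rewrite /= !mem_cat in e1 e2.
  by rewrite (eqP (e1 _)) ?hy' // (eqP (e2 _)) // (tight_head tW).
exists (W :: Ws); split.
- by rewrite /= hsz.
- by move=> W'; rewrite in_cons => /orP [/eqP -> | /hW].
- by apply: cat_subseq.
- move=> W'; rewrite in_cons => /orP [/eqP -> | hW'] x y' hx hy'; first exact: hWpat.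
  by apply: hpre => //; rewrite mem_cat hx.
- rewrite pairwise_cons hpw andbT; apply/allP => V hV.
  apply/allP => x hx; apply/allP => y' hy'; apply/eqP.
  by apply: hpre => //; rewrite mem_cat hx orbT.
Qed.

Lemma ph2 X k (P : nat -> nat -> bool) : amb X -> forall Ws,
  (forall W, W \in Ws -> tight k.+1 W) -> subseq (flatten Ws) X ->
  (forall W, W \in Ws -> 4 ^ size Ws <= head 0 W) -> pairwise (rel1 P) Ws ->
  exists Fs, [/\ size Fs = size Ws, forall F, F \in Fs -> tight k F,
    subseq (flatten Fs) (flatten Ws),
    (forall F, F \in Fs -> exists2 V, V \in Ws & subseq F V)
    & pairwise (hom P) Fs].
Proof.
move=> hA; elim=> [|W Ws IH] hW hX hbig hpw.
  by exists [::]; split.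
have [w [QW [eW hsW hQW]]] := hW W (mem_head _ _).
have hXQ : subseq (flatten QW) X.
  apply: subseq_trans hX; rewrite eW.
  exact: (subseq_trans (subseq_cons _ w) (prefix_subseq (w :: flatten QW) (flatten Ws))).
have hXs : subseq (flatten Ws) X by apply: subseq_trans hX; exact: suffix_subseq.
move: hpw; rewrite pairwise_cons => /andP [/allP hrel hpw].
have hW' : forall W', W' \in Ws -> tight k.+1 W' by move=> W' h; apply: hW; rewrite in_cons h orbT.
have hbig' : forall W', W' \in Ws -> 4 ^ size Ws <= head 0 W'.
  move=> W' h; apply: leq_trans (hbig W' _); last by rewrite in_cons h orbT.
  by apply: leq_pexp2l => //=.
have [Fs [hsz hF sF hFW hpF]] := IH hW' hXs hbig' hpw.
have [Rs [hR sR aR zR]] := multi (fun y x => P x y) hA (map (head 0) Ws) hQW hXQ.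
have hw : 4 ^ size Ws <= w.
  have := hbig W (mem_head _ _); rewrite eW /= expnS => h.
  by apply: leq_trans h; apply: leq_pmull.
have : 0 < size Rs.
  by apply: leq_trans zR; rewrite size_map leq_divRL ?expn_gt0 // mul1n hsW.
case: Rs hR sR aR zR => [//|F Rs'] hR sR aR zR _.
have tF : tight k F by apply: hR; rewrite mem_head.
have sFW : subseq F W.
  rewrite eW; apply: subseq_trans (subseq_cons _ w).
  apply: subseq_trans sR; exact: prefix_subseq.
exists (F :: Fs); split.
- by rewrite /= hsz.
- by move=> F'; rewrite in_cons => /orP [/eqP -> | /hF].
- by apply: cat_subseq.
- move=> F'; rewrite in_cons => /orP [/eqP -> | /hFW [V hV sV]].
    by exists W => //; rewrite mem_head.
  by exists V => //; rewrite in_cons hV orbT.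
- rewrite pairwise_cons hpF andbT; apply/allP => G hG.
  have [V hV sGV] := hFW G hG.
  have /allP hr := hrel V hV.
  have [c /allP hc] := aR (head 0 V) (map_f _ hV).
  apply/allP => x hx; apply/allP => x' hx'; apply/allP => y hy; apply/allP => y' hy'.
  have hxW := mem_subseq sFW hx; have hx'W := mem_subseq sFW hx'.
  have hyV := mem_subseq sGV hy; have hy'V := mem_subseq sGV hy'.
  have /allP e1 := hr x hxW; have /allP e2 := hr x' hx'W.
  rewrite (eqP (e1 y hyV)) (eqP (e2 y' hy'V)).
  have f1 := hc x; have f2 := hc x'.
  rewrite /= !mem_cat hx hx' /= in f1 f2.
  by rewrite (eqP (f1 isT)) (eqP (f2 isT)).
Qed.

Lemma pairwise_flatten (Fs : seq (seq nat)) : sorted ltn (flatten Fs) -> pairwise (allrel ltn) Fs.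
Proof.
elim: Fs => [|F Fs IH] //= hs.
have hs' := hs; rewrite sorted_pairwise in hs'; last exact: ltn_trans.
rewrite pairwise_cat in hs'; case/and3P: hs' => /allrelP har _ hp.
apply/andP; split.
  apply/allP => G hG; apply/allrelP => x y hx hy; apply: har => //.
  exact: (mem_subseq (mem_flatten_sub hG)).
by apply: IH; rewrite sorted_pairwise //; exact: ltn_trans.
Qed.

Lemma grouping_of X P n F0 Fs : sorted ltn X ->
  (forall F, F \in F0 :: Fs -> tight n F) -> subseq (flatten (F0 :: Fs)) X ->
  pairwise (hom P) (F0 :: Fs) -> \max_(x <- F0) x <= size Fs ->
  grouping X P (omega_pow n) (omega_pow 1) (F0 :: Fs).
Proof.
move=> hXs hT hX hpw hmax.
have hsF : sorted ltn (flatten (F0 :: Fs)) by apply: subseq_sorted hX hXs; exact: ltn_trans.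
have hpo := pairwise_flatten hsF.
split; [|split; [|split; [|split]]].
- move=> i hi; have hs := subseq_trans (mem_flatten_sub (mem_nth [::] hi)) hX.
  split; first by apply: subseq_sorted hs hXs; exact: ltn_trans.
  exact: mem_subseq hs.
- move=> i j /andP [hij hj] x y hx hy.
  move/(pairwiseP [::]): hpo => h.
  have := h i j (ltn_trans hij hj) hj hij.
  by move/allrelP; apply.
- move=> i hi; apply: large_of_tight; apply: hT; exact: mem_nth.
- apply/eqP; rewrite /= cats0; apply: nseq0_large; by rewrite size_map.
- move=> i j /andP [hij hj] x x' y y' hx hx' hy hy'.
  move/(pairwiseP [::]): hpw => h.
  have := h i j (ltn_trans hij hj) hj hij.
  move/allP/(_ x hx)/allP/(_ x' hx')/allP/(_ y hy)/allP/(_ y' hy').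
  by move/eqP.
Qed.

Lemma down X j k S : amb X -> subseq S X -> tight (k + j) S ->
  exists S', subseq S' S /\ tight k S'.
Proof.
move=> hA; elim: j S => [|j IH] S hS.
  by rewrite addn0 => h; exists S; split.
rewrite addnS => -[a [Q [eS hsQ hQ]]].
have ha : 3 <= a by apply: sub_ge3 hA hS _; rewrite eS mem_head.
case: Q eS hsQ hQ => [|Q1 Q'] eS hsQ hQ; first by rewrite -hsQ in ha.
have sQ1 : subseq Q1 S.
  rewrite eS; apply: subseq_trans (subseq_cons _ a); exact: prefix_subseq.
have [S' [s' t']] := IH Q1 (subseq_trans sQ1 hS) (hQ _ (mem_head _ _)).
by exists S'; split => //; apply: subseq_trans sQ1.
Qed.

Lemma le_last x0 s x : sorted ltn (x0 :: s) -> x \in x0 :: s -> x <= last x0 s.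
Proof.
elim: s x0 => [|y s IH] x0 /=; first by rewrite inE => _ /eqP ->.
case/andP => hxy hs; rewrite in_cons => /orP [/eqP -> | hx]; last exact: IH.
have := last_ge hs; lia.
Qed.

Lemma ar4 z s e d : s <= z -> 4 * z <= 4 ^ z -> 4 ^ z < e -> 4 ^ e < d -> z * 4 ^ s <= d.
Proof.
move=> hs h4 hz he.
apply: leq_trans (ltnW he).
apply: (@leq_trans (4 ^ z * 4 ^ z)).
  apply: leq_mul; first lia.
  exact: leq_pexp2l.
rewrite -expnD; apply: leq_pexp2l => //; lia.
Qed.

Lemma size_le_last x s : 1 <= x -> sorted ltn (x :: s) -> size (x :: s) <= last x s.
Proof. move=> h1 hs; have := last_ge hs; rewrite /=; lia. Qed.

Lemma le_pow_self z e : 4 ^ z < e -> z <= e.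
Proof. have := le4 z; lia. Qed.

Lemma head_mem (s : seq nat) y : y \in s -> head 0 s \in s.
Proof. by case: s => //= a s _; rewrite mem_head. Qed.

Theorem lemma2p7 (n : nat) (X : seq nat) :
  sorted ltn X -> large (omega_pow (n + 6)) X -> exp_sparse X ->
  forall P : nat -> nat -> bool,
    exists Fs : seq (seq nat), grouping X P (omega_pow n) (omega_pow 1) Fs.
Proof.
move=> hXs hL hsp P.
have hA : amb X by split.
have [T [sT tT]] := large_tight (eqP hL).
have tT' : tight (n + 5).+1 T by rewrite -addnS.
have [t [Bs [eT hsB hB]]] := tT'.
have ht : 3 <= t by apply: sub_ge3 hA sT _; rewrite eT mem_head.
case: Bs eT hsB hB => [|B1 [|B2 [|B3 Bs']]] eT hsB hB; try by rewrite -hsB in ht.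
have hXB : subseq (B1 ++ B2 ++ B3) X.
  apply: subseq_trans sT; rewrite eT; apply: subseq_trans (subseq_cons _ t).
  rewrite /= !catA; exact: prefix_subseq.
have hB1 : tight (n + 5) B1 := hB B1 (mem_head _ _).
have m2 : B2 \in [:: B1, B2, B3 & Bs'] by rewrite !in_cons eqxx orbT.
have hB2 : tight (n + 5) B2 := hB B2 m2.
have m3 : B3 \in [:: B1, B2, B3 & Bs'] by rewrite !in_cons eqxx !orbT.
have hB3 : tight (n + 5) B3 := hB B3 m3.
have sB1 : subseq B1 X by apply: subseq_trans hXB; exact: prefix_subseq.
have sB2 : subseq B2 X.
  by apply: subseq_trans hXB; apply: sub_suf; exact: prefix_subseq.
have sB3 : subseq B3 X.
  by apply: subseq_trans hXB; apply: sub_suf; exact: suffix_subseq.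
have [S1 [sS1 tS1]] := down hA sB1 hB1.
have [S2 [sS2 tS2]] := down hA sB2 hB2.
have hB3' : tight (n + 4).+1 B3 by rewrite -addnS.
have [e [Cs [eB3 hsC hC]]] := hB3'.
have he3 : 3 <= e by apply: sub_ge3 hA sB3 _; rewrite eB3 mem_head.
case: Cs eB3 hsC hC => [|C1 Cs'] eB3 hsC hC; first by rewrite -hsC in he3.
have sC1B : subseq C1 (flatten (C1 :: Cs')) by exact: prefix_subseq.
have sC1 : subseq C1 X.
  by apply: subseq_trans sB3; rewrite eB3; apply: subseq_trans sC1B (subseq_cons _ e).
have hC1 : tight ((n + 3) + 1) C1 by rewrite -addnA; apply: hC; rewrite mem_head.
have [D [sD tD]] := down hA sC1 hC1.
have hZ : subseq ((S1 ++ S2) ++ e :: D) X.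
  apply: subseq_trans hXB; rewrite -catA; apply: cat_subseq => //.
  apply: cat_subseq => //; rewrite eB3.
  exact: (cat_subseq (subseq_refl [:: e]) (subseq_trans sD sC1B)).
have hZ' : subseq (((S1 ++ S2) ++ [:: e]) ++ D) X by rewrite -catA cat1s.
have hZD : subseq ((S1 ++ S2) ++ D) X.
  apply: subseq_trans hZ; apply: cat_subseq => //; exact: subseq_cons.
have tD' : tight (n + 2).+1 D by rewrite -addnS.
have [d [QD [eD hsD hQD]]] := tD'.
have sDX : subseq D X by apply: subseq_trans hZD; exact: suffix_subseq.
have sQD : subseq (flatten QD) D by rewrite eD; exact: subseq_cons.
case: S1 sS1 tS1 hZ hZ' hZD => [_ /tight_nil //|s S1'] sS1 tS1 hZ hZ' hZD.
set Z0 := (s :: S1') ++ S2.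
set z := last s (S1' ++ S2).
have hZs : sorted ltn Z0 by apply: srt_sub hA (subseq_trans (prefix_subseq _ _) hZ).
have hzle : forall x, x \in Z0 -> x <= z by move=> x hx; exact: le_last hZs hx.
have hzin : z \in Z0 by exact: mem_last.
have hs3 : 3 <= s by apply: sub_ge3 hA hZ _; rewrite mem_head.
have hsz : size Z0 <= z := size_le_last (ltnW (ltnW hs3)) hZs.
have hze : 4 ^ z < e by apply: sub_sparse hA hZ hzin (mem_head _ _).
have heD : forall y, y \in D -> 4 ^ e < y.
  by move=> y hy; apply: sub_sparse hA hZ' _ hy; rewrite mem_cat mem_seq1 eqxx orbT.
have hd : 4 ^ e < d by apply: heD; rewrite eD mem_head.
have [Rs [hR sR aR zR]] := multi P hA Z0 hQD (subseq_trans sQD sDX).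
have hzR : z <= size Rs.
  apply: leq_trans zR; rewrite hsD leq_divRL ?expn_gt0 //.
  exact: ar4 hsz (le4 z) hze hd.
set Ys := take z Rs.
have sYs : subseq (flatten Ys) (flatten Rs) by exact: sub_take_flatten.
have sRD : subseq (flatten Rs) D by exact: subseq_trans sR sQD.
have hYs : forall Y, Y \in Ys -> tight (n + 1).+1 Y.
  by move=> Y /mem_take /hR; rewrite -addnS.
have [Ws [hWsz hW sW _ hpw]] := ph1 P hA (pre := [::]) hYs (subseq_trans sYs (subseq_trans sRD sDX)).
have hW' : forall W, W \in Ws -> tight n.+1 W by move=> W /hW; rewrite addn1.
have sWD : subseq (flatten Ws) D by apply: subseq_trans sW (subseq_trans sYs sRD).
have hbig : forall W, W \in Ws -> 4 ^ size Ws <= head 0 W.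
  move=> W hWin.
  have hh : head 0 W \in D.
    apply: (mem_subseq sWD); apply: (mem_subseq (mem_flatten_sub hWin)).
    by have [a [Q [-> _ _]]] := hW' W hWin; rewrite mem_head.
  apply: ltnW; apply: leq_ltn_trans (heD _ hh).
  rewrite hWsz (size_takel hzR); apply: leq_pexp2l => //.
  exact: le_pow_self hze.
have [Fs [hFsz hF sF hFW hpF]] := @ph2 X n P hA _ hW' (subseq_trans sWD sDX) hbig hpw.
set y0 := head 0 (flatten Rs).
have [c0 [F0 [tF0 sF0 aF0]]] := @pl_all X n hA _ _ (fun x => P x y0) tS1 tS2
  (subseq_trans (prefix_subseq _ _) hZ).
exists (F0 :: Fs).
apply: grouping_of => //.
- by move=> F; rewrite in_cons => /orP [/eqP -> | /hF].
- apply: subseq_trans hZD; apply: cat_subseq => //.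
  exact: subseq_trans sF sWD.
- rewrite pairwise_cons hpF andbT; apply/allP => G hG.
  have sGR : subseq G (flatten Rs).
    apply: subseq_trans (mem_flatten_sub hG) _.
    exact: subseq_trans sF (subseq_trans sW sYs).
  apply/allP => x hx; apply/allP => x' hx'; apply/allP => y hy; apply/allP => y' hy'.
  have hxZ := mem_subseq sF0 hx; have hx'Z := mem_subseq sF0 hx'.
  have hyR := mem_subseq sGR hy; have hy'R := mem_subseq sGR hy'.
  have hy0 : y0 \in flatten Rs := head_mem hyR.
  have [c /allP hc] := aR x hxZ; have [c' /allP hc'] := aR x' hx'Z.
  rewrite (eqP (hc y hyR)) (eqP (hc' y' hy'R)) -(eqP (hc y0 hy0)) -(eqP (hc' y0 hy0)).
  move/allP: aF0 => h; by rewrite (eqP (h x hx)) (eqP (h x' hx')).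
- rewrite hFsz hWsz (size_takel hzR).
  apply/bigmax_leqP_seq => i hi _; apply: hzle; apply: (mem_subseq sF0); exact: hi.
Qed.
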